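(* Let $F:\mathcal{G}_{\Sigma,\Delta,\pi}\to\mathcal{G}_{\Sigma,\Delta,\pi}$ be a causal graph dynamics that is monotonic for the subgraph order and admits a monotonic local rule. Assume that for every renaming $R$ the set $\mathrm{Conj}_F(R)$ is a singleton (unique conjugate assumption). Then there is exactly one functor $\widetilde{F}:\mathbf{G}_{\Sigma,\Delta,\pi}\to\mathbf{G}_{\Sigma,\Delta,\pi}$ satisfying $\mathrm{U}\circ F=\widetilde{F}\circ\mathrm{U}$.
   Context: Fix an uncountably infinite set $\mathcal{V}$, sets $\Sigma,\Delta$, finite $\pi$. Graphs: countable $V(G)\subset\mathcal{V}$, a set $E(G)$ of pairwise disjoint two-element subsets of $V(G)\times\pi$, partial labelings $\sigma(G),\delta(G)$; $\mathcal{G}_{\Sigma,\Delta,\pi}$ the set of graphs, ordered by componentwise inclusion $\subseteq$. Renamings are bijections of $\mathcal{V}$, acting naturally on graphs ($V(R(G))=R(V(G))$, edges $\{u\!:\!i,v\!:\!j\}\mapsto\{R(u)\!:\!i,R(v)\!:\!j\}$, labelings precomposed with $R^{-1}$). $\mathrm{Conj}_F(R)$ is the set of renamings $R'$ with $F\circ R=R'\circ F$. Disks $G^r_c$: vertices at distance $\le r+1$ from $c$, edges with an endpoint at distance $\le r$, vertex labels only at distance $\le r$. A local rule of radius $r$ maps radius-$r$ disks to graphs with renaming covariance, disjointness preservation, bounded output size and pairwise consistency of outputs on a common graph; a CGD is $F(G)=\bigcup_{v\in V(G)} f(G^r_v)$; monotonic means w.r.t. $\subseteq$. Category $\mathbf{G}_{\Sigma,\Delta,\pi}$: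 objects graphs, morphisms $m:G\to H$ given by renamings $|m|$ with $|m|(G)\subseteq H$, composition by composition of renamings, identities with identity renaming. $\mathrm{U}:(\mathcal{G}_{\Sigma,\Delta,\pi},\subseteq)\to\mathbf{G}_{\Sigma,\Delta,\pi}$ is the identity on objects and sends $G\subseteq H$ to the morphism $G\to H$ with identity renaming. *)

(* Defs.v *)
From Stdlib Require Import Classical ClassicalDescription FunctionalExtensionality
  ProofIrrelevance List FinFun.

Set Implicit Arguments.

Section CGD.
Variables (V Sg Dl P : Type).
(* V = the name space \mathcal{V}; Sg = Sigma (vertex labels);
   Dl = Delta (edge labels); P = pi (ports). *)

Definition port := (V * P)%type.
Definition edge := port -> Prop.   (* an edge is a (two-element) set of ports *)

Record rgraph := RGraph {
  rV : V -> Prop;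
  rE : edge -> Prop;
  rs : V -> option Sg;
  rd : edge -> option Dl }.

Definition countable (A : V -> Prop) : Prop :=
  exists f : V -> nat, forall x y, A x -> A y -> f x = f y -> x = y.

Definition two_elem (e : edge) : Prop :=
  exists a b : port, a <> b /\ forall p, e p <-> p = a \/ p = b.

Definition is_graph (g : rgraph) : Prop :=
  countable (rV g)
  /\ (forall e, rE g e -> two_elem e /\ forall p, e p -> rV g (fst p))
  /\ (forall e e', rE g e -> rE g e' -> e = e' \/ forall p, e p -> e' p -> False)
  /\ (forall v a, rs g v = Some a -> rV g v)
  /\ (forall e a, rd g e = Some a -> rE g e).

Definition graph := { g : rgraph | is_graph g }.

Definition subg (g h : rgraph) : Prop :=
  (forall v, rV g v -> rV h v)
  /\ (forall e, rE g e -> rE h e)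
  /\ (forall v a, rs g v = Some a -> rs h v = Some a)
  /\ (forall e a, rd g e = Some a -> rd h e = Some a).

Lemma subg_refl g : subg g g.
Proof. repeat split; auto. Qed.

Lemma subg_trans g h k : subg g h -> subg h k -> subg g k.
Proof.
  intros [a1 [b1 [c1 d1]]] [a2 [b2 [c2 d2]]]; repeat split; auto.
Qed.

Record renaming := Renaming {
  ren : V -> V;
  ren_inv : V -> V;
  ren_K : forall v, ren_inv (ren v) = v;
  ren_invK : forall v, ren (ren_inv v) = v }.

Definition id_ren : renaming :=
  @Renaming (fun v => v) (fun v => v) (fun v => eq_refl) (fun v => eq_refl).

Program Definition comp_ren (R1 R2 : renaming) : renaming :=
  @Renaming (fun v => ren R2 (ren R1 v)) (fun v => ren_inv R1 (ren_inv R2 v)) _ _.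
Next Obligation. now rewrite ren_K, ren_K. Qed.
Next Obligation. now rewrite ren_invK, ren_invK. Qed.

(* natural action of a renaming on graphs:
   V(R G) = R(V(G)); an edge e is in E(R G) iff it is the image of an edge of G,
   i.e. iff its preimage {u:i | R(u):i in e} is in E(G); labelings are
   precomposed with R^{-1}. *)
Definition rename (R : renaming) (g : rgraph) : rgraph := {|
  rV := fun v => rV g (ren_inv R v);
  rE := fun e => rE g (fun q => e (ren R (fst q), snd q));
  rs := fun v => rs g (ren_inv R v);
  rd := fun e => rd g (fun q => e (ren R (fst q), snd q)) |}.

Lemma rename_mono R g h : subg g h -> subg (rename R g) (rename R h).
Proof. intros [a [b [c d]]]; repeat split; simpl; auto. Qed.

Lemma rename_comp R1 R2 g : rename (comp_ren R1 R2) g = rename R2 (rename R1 g).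
Proof. reflexivity. Qed.

Lemma eta_edge (e : edge) : (fun q : port => e (fst q, snd q)) = e.
Proof. apply functional_extensionality; intros [x y]; reflexivity. Qed.

Lemma rename_id_subg g : subg (rename id_ren g) g.
Proof.
  repeat split; simpl; auto.
  - intros e; now rewrite eta_edge.
  - intros e a; now rewrite eta_edge.
Qed.

Definition Hom (G H : graph) : Type :=
  { R : renaming | subg (rename R (proj1_sig G)) (proj1_sig H) }.

Definition id_hom (G : graph) : Hom G G :=
  exist _ id_ren (rename_id_subg (proj1_sig G)).

Definition comp_hom (G H K : graph) (m1 : Hom G H) (m2 : Hom H K) : Hom G K :=
  exist _ (comp_ren (proj1_sig m1) (proj1_sig m2))
    (subg_trans (rename_mono (proj1_sig m2) (proj2_sig m1)) (proj2_sig m2)).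

Definition U_mor (G H : graph) (p : subg (proj1_sig G) (proj1_sig H)) : Hom G H :=
  exist _ id_ren (subg_trans (rename_id_subg (proj1_sig G)) p).

Record endofunctor := Endofunctor {
  fobj : graph -> graph;
  fmor : forall G H : graph, Hom G H -> Hom (fobj G) (fobj H);
  fmor_id : forall G, fmor (id_hom G) = id_hom (fobj G);
  fmor_comp : forall G H K (m1 : Hom G H) (m2 : Hom H K),
      fmor (comp_hom m1 m2) = comp_hom (fmor m1) (fmor m2) }.

(* U o F = Ftilde o U, as functors (G, subseteq) -> G_{Sigma,Delta,pi}:
   equal on objects, and Ftilde(U(G subseteq H)) is the morphism
   F(G) -> F(H) with identity renaming, i.e. U(F(G) subseteq F(H)). *)
Definition commutes_U (F : graph -> graph) (Phi : endofunctor) : Prop :=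
  (forall G, fobj Phi G = F G)
  /\ (forall (G H : graph) (p : subg (proj1_sig G) (proj1_sig H)),
        proj1_sig (fmor Phi (U_mor G H p)) = id_ren).

Definition monotone_dyn (F : graph -> graph) : Prop :=
  forall G H : graph, subg (proj1_sig G) (proj1_sig H) ->
    subg (proj1_sig (F G)) (proj1_sig (F H)).

Definition conj_ren (F : graph -> graph) (R R' : renaming) : Prop :=
  forall G G' : graph, proj1_sig G' = rename R (proj1_sig G) ->
    proj1_sig (F G') = rename R' (proj1_sig (F G)).

Definition adj (g : rgraph) (u v : V) : Prop :=
  exists e i j, rE g e /\ e (u, i) /\ e (v, j) /\ (u, i) <> (v, j).

(* within g n u v  <->  dist_g(u, v) <= n *)
Fixpoint within (g : rgraph) (n : nat) (u v : V) : Prop :=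
  match n with
  | O => u = v
  | S n => within g n u v \/ exists w, within g n u w /\ adj g w v
  end.

Definition disk (g : rgraph) (r : nat) (c : V) : rgraph := {|
  rV := fun v => rV g v /\ within g (S r) c v;
  rE := fun e => rE g e /\ exists p, e p /\ within g r c (fst p);
  rs := fun v => if excluded_middle_informative (within g r c v) then rs g v else None;
  rd := fun e => if excluded_middle_informative
                      (rE g e /\ exists p, e p /\ within g r c (fst p))
                 then rd g e else None |}.

Definition is_disk (r : nat) (D : rgraph) : Prop :=
  exists (G : graph) (c : V), rV (proj1_sig G) c /\ D = disk (proj1_sig G) r c.

(* two graphs are consistent: their union is a graph *)
Definition consistent (g h : rgraph) : Prop :=
  (forall e e', rE g e -> rE h e' -> e = e' \/ forall p, e p -> e' p -> False)
  /\ (forall v a b, rs g v = Some a -> rs h v = Some b -> a = b)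
  /\ (forall e a b, rd g e = Some a -> rd h e = Some b -> a = b).

Definition local_rule (r : nat) (f : rgraph -> rgraph) : Prop :=
  (forall D, is_disk r D -> is_graph (f D))
  /\ (forall R : renaming, exists R' : renaming,
        forall D, is_disk r D -> f (rename R D) = rename R' (f D))
  /\ (forall D1 D2, is_disk r D1 -> is_disk r D2 ->
        (forall v, rV D1 v -> rV D2 v -> False) ->
        forall v, rV (f D1) v -> rV (f D2) v -> False)
  /\ (exists b : nat, forall D, is_disk r D ->
        exists l : list V, length l <= b /\ forall v, rV (f D) v -> In v l)
  /\ (forall (G : graph) u v, rV (proj1_sig G) u -> rV (proj1_sig G) v ->
        consistent (f (disk (proj1_sig G) r u)) (f (disk (proj1_sig G) r v))).

Definition monotone_rule (r : nat) (f : rgraph -> rgraph) : Prop :=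
  forall D D', is_disk r D -> is_disk r D' -> subg D D' -> subg (f D) (f D').

Definition generates (r : nat) (f : rgraph -> rgraph) (F : graph -> graph) : Prop :=
  forall G : graph,
    let g := proj1_sig G in
    let FG := proj1_sig (F G) in
    (forall x, rV FG x <-> exists v, rV g v /\ rV (f (disk g r v)) x)
    /\ (forall e, rE FG e <-> exists v, rV g v /\ rE (f (disk g r v)) e)
    /\ (forall x a, rs FG x = Some a <-> exists v, rV g v /\ rs (f (disk g r v)) x = Some a)
    /\ (forall e a, rd FG e = Some a <-> exists v, rV g v /\ rd (f (disk g r v)) e = Some a).

Definition cgd_with (r : nat) (f : rgraph -> rgraph) (F : graph -> graph) : Prop :=
  local_rule r f /\ generates r f F.

End CGD.

(* Main.v *)
Require Import Defs.
From Stdlib Require Import FinFun.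
From Stdlib Require Import Classical ClassicalEpsilon FunctionalExtensionality
  ProofIrrelevance PropExtensionality.

Set Implicit Arguments.
Section Aux.
Variables (V Sg Dl P : Type).
Notation graph := (graph V Sg Dl P).
Notation rgraph := (rgraph V Sg Dl P).

Lemma ren_eq (R1 R2 : renaming V) :
  (forall v, ren R1 v = ren R2 v) -> (forall v, ren_inv R1 v = ren_inv R2 v) -> R1 = R2.
Proof.
  destruct R1 as [a b c d], R2 as [a' b' c' d']; simpl; intros H1 H2.
  assert (a = a') by (apply functional_extensionality; auto).
  assert (b = b') by (apply functional_extensionality; auto).
  subst. f_equal; apply proof_irrelevance.
Qed.

Lemma ren_inj (R : renaming V) x y : ren R x = ren R y -> x = y.
Proof. intro H. rewrite <- (ren_K R x), <- (ren_K R y), H. reflexivity. Qed.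

Lemma rename_eq_id (R : renaming V) (g : rgraph) :
  (forall v, ren R v = v) -> rename R g = g.
Proof.
  intro Hid.
  assert (Hi : forall v, ren_inv R v = v).
  { intro v. transitivity (ren_inv R (ren R v)); [rewrite Hid; reflexivity | apply ren_K]. }
  assert (He : forall e : edge V P, (fun q : port V P => e (ren R (fst q), snd q)) = e).
  { intro e; apply functional_extensionality; intros [x i]; simpl; now rewrite Hid. }
  destruct g as [a b c d]; unfold rename; simpl; f_equal;
    apply functional_extensionality; intro x; try rewrite Hi; try rewrite He; reflexivity.
Qed.

Lemma subg_antisym (g h : rgraph) : subg g h -> subg h g -> g = h.
Proof.
  destruct g as [a b c d], h as [a' b' c' d']; unfold subg; simpl.
  intros [H1 [H2 [H3 H4]]] [K1 [K2 [K3 K4]]].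
  f_equal; apply functional_extensionality; intro x.
  - apply propositional_extensionality; split; auto.
  - apply propositional_extensionality; split; auto.
  - destruct (c x) eqn:E1; [symmetry; now apply H3|].
    destruct (c' x) eqn:E2; [rewrite (K3 _ _ E2) in E1; discriminate | reflexivity].
  - destruct (d x) eqn:E1; [symmetry; now apply H4|].
    destruct (d' x) eqn:E2; [rewrite (K4 _ _ E2) in E1; discriminate | reflexivity].
Qed.

Lemma sig_eq_g (G H : graph) : proj1_sig G = proj1_sig H -> G = H.
Proof.
  destruct G, H; simpl; intro; subst; f_equal; apply proof_irrelevance.
Qed.

Lemma hom_eq (G H : graph) (m1 m2 : Hom G H) : proj1_sig m1 = proj1_sig m2 -> m1 = m2.
Proof.
  destruct m1, m2; simpl; intro; subst; f_equal; apply proof_irrelevance.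
Qed.

Lemma is_graph_rename (R : renaming V) (g : rgraph) : is_graph g -> is_graph (rename R g).
Proof.
  intros [[f Hf] [HE [HD [Hs Hd]]]].
  assert (Hpre : forall (e : edge V P) x i,
             e (x, i) = (fun q : port V P => e (ren R (fst q), snd q)) (ren_inv R x, i)).
  { intros; simpl; now rewrite ren_invK. }
  split; [|split; [|split; [|split]]]; simpl.
  - exists (fun v => f (ren_inv R v)). intros x y Hx Hy Hxy.
    rewrite <- (ren_invK R x), <- (ren_invK R y). f_equal. auto.
  - intros e He. destruct (HE _ He) as [[a [b [Hab Hp]]] Hv]. split.
    + exists (ren R (fst a), snd a), (ren R (fst b), snd b). split.
      * intro Heq. apply Hab. destruct a, b; simpl in *. injection Heq; intros.
        apply ren_inj in H0. congruence.
      * intros [x i]. rewrite (Hpre e x i), (Hp (ren_inv R x, i)).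
        destruct a as [a1 a2], b as [b1 b2]; simpl. split.
        -- intros [H|H]; injection H; intros; subst; [left|right]; now rewrite ren_invK.
        -- intros [H|H]; injection H; intros; subst; [left|right]; now rewrite ren_K.
    + intros [x i] Hp'. simpl. rewrite (Hpre e x i) in Hp'. apply (Hv _ Hp').
  - intros e e' He He'. destruct (HD _ _ He He') as [Heq|Hdis].
    + left. apply functional_extensionality; intros [x i].
      rewrite (Hpre e x i), (Hpre e' x i). exact (f_equal (fun h => h (ren_inv R x, i)) Heq).
    + right. intros [x i] H1 H2. rewrite (Hpre e x i) in H1. rewrite (Hpre e' x i) in H2.
      exact (Hdis _ H1 H2).
  - intros v a H. exact (Hs _ _ H).
  - intros e a H. exact (Hd _ _ H).
Qed.

Definition rgr (R : renaming V) (G : graph) : graph :=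
  exist _ (rename R (proj1_sig G)) (is_graph_rename R (proj2_sig G)).

Definition mG (R : renaming V) (G : graph) : Hom G (rgr R G) :=
  exist _ R (subg_refl _).

Definition inv_ren (R : renaming V) : renaming V :=
  @Renaming V (ren_inv R) (ren R) (ren_invK R) (ren_K R).

Lemma comp_id_r (R : renaming V) : comp_ren R (id_ren V) = R.
Proof. apply ren_eq; reflexivity. Qed.
Lemma comp_id_l (R : renaming V) : comp_ren (id_ren V) R = R.
Proof. apply ren_eq; reflexivity. Qed.

Definition empty_rg : rgraph :=
  {| rV := fun _ => False; rE := fun _ => False; rs := fun _ => None; rd := fun _ => None |}.

Lemma empty_is_graph : is_graph empty_rg.
Proof.
  split; [|split; [|split; [|split]]]; simpl; try tauto.
  - exists (fun _ => 0). tauto.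
  - intros; discriminate.
  - intros; discriminate.
Qed.

Definition emptyG : graph := exist _ empty_rg empty_is_graph.

Lemma empty_subg (G : graph) : subg (proj1_sig emptyG) (proj1_sig G).
Proof. repeat split; simpl; try tauto; intros; discriminate. Qed.

Section Uniq.
Variable F : graph -> graph.
Variable Phi : endofunctor V Sg Dl P.
Hypothesis HC : commutes_U F Phi.

Definition T (R : renaming V) (G : graph) : renaming V := proj1_sig (fmor Phi (mG R G)).

Lemma fact_m (G H : graph) (m : Hom G H) :
  m = comp_hom (mG (proj1_sig m) G) (U_mor (rgr (proj1_sig m) G) H (proj2_sig m)).
Proof. apply hom_eq. simpl. symmetry; apply comp_id_r. Qed.

Lemma T_gen (G H : graph) (m : Hom G H) : proj1_sig (fmor Phi m) = T (proj1_sig m) G.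
Proof.
  rewrite (fact_m m) at 1. rewrite fmor_comp. simpl.
  destruct HC as [_ HU]. rewrite HU. apply comp_id_r.
Qed.

Lemma T_mono (R : renaming V) (G K : graph) (p : subg (proj1_sig G) (proj1_sig K)) :
  T R G = T R K.
Proof.
  pose (m := comp_hom (U_mor G K p) (mG R K)).
  pose proof (T_gen m) as E1.
  assert (Em : proj1_sig m = R) by (simpl; apply comp_id_l).
  rewrite Em in E1. rewrite <- E1.
  unfold m. rewrite fmor_comp. simpl.
  destruct HC as [_ HU]. rewrite HU. rewrite comp_id_l. reflexivity.
Qed.

Lemma T_const (R : renaming V) (G : graph) : T R G = T R emptyG.
Proof. symmetry. apply T_mono. apply empty_subg. Qed.

Lemma T_conj (R : renaming V) : conj_ren F R (T R emptyG).
Proof.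
  destruct HC as [HO HU].
  intros G0 G' HG'.
  assert (p1 : subg (rename R (proj1_sig G0)) (proj1_sig G')) by (rewrite HG'; apply subg_refl).
  pose (m := exist (fun R0 => subg (rename R0 (proj1_sig G0)) (proj1_sig G')) R p1 : Hom G0 G').
  assert (p2 : subg (rename (inv_ren R) (proj1_sig G')) (proj1_sig G0)).
  { rewrite HG'. rewrite <- rename_comp. rewrite rename_eq_id; [apply subg_refl|].
    intro v; simpl; apply ren_K. }
  pose (m' := exist (fun R0 => subg (rename R0 (proj1_sig G')) (proj1_sig G0)) (inv_ren R) p2
              : Hom G' G0).
  assert (Hmm : comp_hom m m' = id_hom G0).
  { apply hom_eq; simpl. apply ren_eq; intro v; simpl; apply ren_K. }
  assert (Hf := f_equal (fun x => proj1_sig x) (f_equal (@fmor V Sg Dl P Phi G0 G0) Hmm)).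
  simpl in Hf. rewrite fmor_comp, fmor_id in Hf. simpl in Hf.
  pose proof (proj2_sig (fmor Phi m)) as S1. pose proof (proj2_sig (fmor Phi m')) as S2.
  simpl in S1, S2.
  rewrite (T_gen m) in Hf, S1. rewrite (T_gen m') in Hf, S2. simpl in Hf, S1, S2.
  rewrite T_const in Hf, S1. rewrite !HO in S1, S2.
  set (S := T R emptyG) in *. set (S' := T (inv_ren R) G') in *.
  assert (K1 : forall v, ren S' (ren S v) = v).
  { intro v. exact (f_equal (fun r => ren r v) Hf). }
  apply subg_antisym; [|exact S1].
  apply rename_mono with (R := S) in S2.
  rewrite <- rename_comp in S2. rewrite rename_eq_id in S2; [exact S2|].
  intro w; simpl. rewrite <- (ren_invK S w) at 1. rewrite K1. apply ren_invK.
Qed.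

End Uniq.

Lemma endo_eq (Phi1 Phi2 : endofunctor V Sg Dl P) :
  (forall G, fobj Phi1 G = fobj Phi2 G) ->
  (forall G H (m : Hom G H), proj1_sig (fmor Phi1 m) = proj1_sig (fmor Phi2 m)) ->
  Phi1 = Phi2.
Proof.
  destruct Phi1 as [o1 m1 i1 c1], Phi2 as [o2 m2 i2 c2]; simpl; intros Ho Hm.
  assert (o1 = o2) by (apply functional_extensionality; auto). subst o2.
  assert (m1 = m2).
  { apply functional_extensionality_dep; intro G.
    apply functional_extensionality_dep; intro H.
    apply functional_extensionality; intro m. apply hom_eq. apply Hm. }
  subst m2. f_equal; apply proof_irrelevance.
Qed.

End Aux.

Theorem proposition4p12 (V Sg Dl P : Type)
  (HV : ~ countable (fun _ : V => True))
  (HP : Finite P)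
  (F : graph V Sg Dl P -> graph V Sg Dl P)
  (Hmono : monotone_dyn F)
  (Hrule : exists (r : nat) (f : rgraph V Sg Dl P -> rgraph V Sg Dl P),
             cgd_with r f F /\ monotone_rule r f)
  (Huniq : forall R : renaming V, exists! R' : renaming V, conj_ren F R R') :
  exists! Phi : endofunctor V Sg Dl P, commutes_U F Phi.
Proof.
  pose (C := fun R => proj1_sig (constructive_indefinite_description _ (Huniq R))).
  assert (CP : forall R, conj_ren F R (C R)).
  { intro R. exact (proj1 (proj2_sig (constructive_indefinite_description _ (Huniq R)))). }
  assert (CU : forall R R', conj_ren F R R' -> C R = R').
  { intros R R' H. exact (proj2 (proj2_sig (constructive_indefinite_description _ (Huniq R))) R' H). }
  assert (Hsub : forall (G H : graph V Sg Dl P) (m : Hom G H),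
             subg (rename (C (proj1_sig m)) (proj1_sig (F G))) (proj1_sig (F H))).
  { intros G H m. rewrite <- (CP (proj1_sig m) G (rgr (proj1_sig m) G) eq_refl).
    apply Hmono. exact (proj2_sig m). }
  assert (Cid : C (id_ren V) = id_ren V).
  { apply CU. intros G G' HG'. rewrite rename_eq_id in HG' by reflexivity.
    rewrite (sig_eq_g G' G HG'). symmetry; apply rename_eq_id; reflexivity. }
  assert (Ccomp : forall R1 R2, C (comp_ren R1 R2) = comp_ren (C R1) (C R2)).
  { intros R1 R2. apply CU. intros G0 G' HG'.
    rewrite (CP R2 (rgr R1 G0) G' HG'). simpl.
    rewrite (CP R1 G0 (rgr R1 G0) eq_refl). reflexivity. }
  pose (fm := fun G H (m : Hom G H) =>
          exist (fun R0 => subg (rename R0 (proj1_sig (F G))) (proj1_sig (F H)))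
                (C (proj1_sig m)) (Hsub G H m) : Hom (F G) (F H)).
  unshelve eset (Phi := @Endofunctor V Sg Dl P F fm _ _).
  - intro G. apply hom_eq. simpl. exact Cid.
  - intros G H K m1 m2. apply hom_eq. simpl. apply Ccomp.
  - assert (HC : commutes_U F Phi).
    { split; [reflexivity|]. intros G H p. simpl. exact Cid. }
    exists Phi. split; [exact HC|].
    intros Phi' HC'. apply endo_eq.
    + intro G. symmetry. apply (proj1 HC').
    + intros G H m. simpl. rewrite (T_gen HC' m). rewrite (T_const HC').
      apply CU. apply (T_conj HC').
Qed.
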